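(* Let $m$ be a positive integer, $\xi\in\mathbb Z_m$, $\Gamma=\widetilde{BS}(m,\xi)$, $n\ge1$ and $t_1,\dots,t_n\in\{0,\dots,m-1\}$. For integers $c,u_1,\dots,u_n$ let $$w(c,u_1,\dots,u_n)=a^{n+1}\,(ce_0)\,a^{-1}\,(-u_1e_0)\,a^{-1}\,(-u_2e_0)\,a^{-1}\cdots(-u_ne_0)\,a^{-1}\in\Gamma,$$ where $(ke_0)$ denotes the $k$-th power of $e_0$. The following are equivalent: (i) $w(m,t_1,\dots,t_n)\in E$; (ii) $w(m,t_1,\dots,t_n)\,e_0\,w(-m,-t_1,\dots,-t_n)\,e_0^{-1}=1$ in $\Gamma$; (iii) $t_i=r_i(\xi)$ for every $1\le i\le n$.
   Context: $\mathbb Z_m$ is the ring of $m$-adic integers. The functions $r_i$: $r_0(\xi)=0$, $s_0(\xi)=1$, and for $i\ge1$, $r_i(\xi)\in\{0,\dots,m-1\}$, $s_i(\xi)\in\mathbb Z_m$ unique with $\xi s_{i-1}(\xi)=ms_i(\xi)+r_i(\xi)$. Let $E$ be the free abelian group with basis $e_0,e_1,\dots$ (written additively), $E_{m,\xi}\le E$ with basis $me_0,\ e_i-r_i(\xi)e_0$ ($i\ge1$), $E_1\le E$ with basis $e_1,e_2,\dots$, and $\phi:E_{m,\xi}\to E_1$ the isomorphism $\phi(me_0)=e_1$, $\phi(e_i-r_i(\xi)e_0)=e_{i+1}$. $\widetilde{BS}(m,\xi)=\langle E,a\mid axa^{-1}=\phi(x)\ \forall x\in E_{m,\xi}\rangle$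 (HNN extension), with $E$ viewed as a subgroup. *)

(* Defs.v *)
From HB Require Import structures.
From mathcomp Require Import all_boot all_order all_algebra.
Set Implicit Arguments. Unset Strict Implicit. Unset Printing Implicit Defensive.
Import Order.TTheory GRing.Theory Num.Theory.

(* m-adic integers Z_m = lim_k Z/m^k, represented by compatible        *)
(* sequences of residues x k in {0,..,m^k - 1} with x (k+1) = x k mod m^k. *)
Definition is_padic (m : nat) (x : nat -> nat) : Prop :=
  forall k, x k < m ^ k /\ x k.+1 %% m ^ k = x k.

Definition padic_one (m : nat) : nat -> nat := fun k => 1 %% m ^ k.
Definition padic_mul (m : nat) (x y : nat -> nat) : nat -> nat :=
  fun k => (x k * y k) %% m ^ k.

(* s_0 = 1; s_i = (xi * s_{i-1} - r_i) / m, with r_i = (xi * s_{i-1}) mod m.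
   (y - r)/m has k-th residue (y_{k+1} - r) %/ m.  These are exactly the
   unique r_i in {0..m-1}, s_i in Z_m with xi s_{i-1} = m s_i + r_i. *)
Fixpoint padic_s (m : nat) (xi : nat -> nat) (i : nat) : nat -> nat :=
  match i with
  | 0 => padic_one m
  | j.+1 => fun k => (padic_mul m xi (padic_s m xi j) k.+1
                      - padic_mul m xi (padic_s m xi j) 1) %/ m
  end.

Definition padic_r (m : nat) (xi : nat -> nat) (i : nat) : nat :=
  match i with
  | 0 => 0
  | j.+1 => padic_mul m xi (padic_s m xi j) 1
  end.

(* The group BS~(m,xi), given by the presentation of the HNN extension:
   generators a, e_0, e_1, ...; relators [e_i,e_j],
   a e_0^m a^-1 e_1^-1, and a e_i e_0^(-r_i) a^-1 e_(i+1)^-1 (i >= 1).  *)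
Inductive gen := GA | GE of nat.
Definition letter := (gen * bool)%type.   (* (g, true) = g^-1 *)
Definition word := seq letter.
Definition linv (l : letter) : letter := (l.1, ~~ l.2).

Definition gpow (g : gen) (k : int) : word :=
  match k with
  | Posz n => nseq n (g, false)
  | Negz n => nseq n.+1 (g, true)
  end.

Inductive relator (m : nat) (xi : nat -> nat) : word -> Prop :=
| rel_comm i j :
    relator m xi [:: (GE i, false); (GE j, false); (GE i, true); (GE j, true)]
| rel_zero :
    relator m xi ((GA, false) :: gpow (GE 0) (Posz m) ++ [:: (GA, true); (GE 1, true)])
| rel_succ i : 0 < i ->
    relator m xi ((GA, false) :: (GE i, false)
                   :: gpow (GE 0) (- (Posz (padic_r m xi i)))%R
                   ++ [:: (GA, true); (GE i.+1, true)]).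

Inductive grp_eq (m : nat) (xi : nat -> nat) : word -> word -> Prop :=
| geq_refl w : grp_eq m xi w w
| geq_sym w1 w2 : grp_eq m xi w1 w2 -> grp_eq m xi w2 w1
| geq_trans w1 w2 w3 : grp_eq m xi w1 w2 -> grp_eq m xi w2 w3 -> grp_eq m xi w1 w3
| geq_cancel u v l : grp_eq m xi (u ++ l :: linv l :: v) (u ++ v)
| geq_rel u v r : relator m xi r -> grp_eq m xi (u ++ r ++ v) (u ++ v).

Definition is_E_letter (l : letter) : bool :=
  if l.1 is GE _ then true else false.

Definition in_E (m : nat) (xi : nat -> nat) (w : word) : Prop :=
  exists v : word, all is_E_letter v /\ grp_eq m xi w v.

Definition wword (n : nat) (c : int) (u : nat -> int) : word :=
  nseq n.+1 (GA, false) ++ gpow (GE 0) c ++ (GA, true)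
    :: flatten [seq gpow (GE 0) (- u i)%R ++ [:: (GA, true)] | i <- iota 1 n].

Arguments relator : clear implicits.
Arguments grp_eq : clear implicits.

(* Main.v *)
Require Import Defs.
From HB Require Import structures.
From mathcomp Require Import all_boot all_order all_algebra.

Set Implicit Arguments. Unset Strict Implicit.
Section Model.
Variable m : nat.
Variable xi : nat -> nat.
Hypothesis m_gt0 : (0 < m)%N.
Import Order.TTheory GRing.Theory Num.Theory.
Local Open Scope ring_scope.

Definition wt (i : nat) : int := if i is 0 then 1 else Posz (padic_r m xi i).
Definition piE (x : seq int) : int := \sum_(i < size x) x`_i * wt i.
Definition addE (x y : seq int) := mkseq (fun i => x`_i + y`_i) (maxn (size x) (size y)).
Definition sc (k : int) (x : seq int) := map ( *%R k) x.
Definition ei (i : nat) : seq int := rcons (nseq i 0) 1.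
Definition eqv (x y : seq int) := forall i, x`_i = y`_i.

Lemma nth_addE x y i : (addE x y)`_i = x`_i + y`_i.
Proof.
rewrite /addE; case: (ltnP i (maxn (size x) (size y))) => h.
  by rewrite nth_mkseq.
move: (h); rewrite geq_max => /andP[hx hy].
by rewrite nth_default ?size_mkseq // !nth_default ?addr0.
Qed.

Lemma nth_sc k x i : (sc k x)`_i = k * x`_i.
Proof.
case: (ltnP i (size x)) => h; first by rewrite (nth_map 0).
by rewrite !nth_default ?size_map ?mulr0.
Qed.

Lemma nth_ei j i : (ei j)`_i = if i == j then 1 else 0.
Proof.
rewrite /ei nth_rcons size_nseq nth_nseq.
case: (ltngtP i j) => h //; by case: ifP.
Qed.

Lemma piE_ext x N : (size x <= N)%N -> piE x = \sum_(i < N) x`_i * wt i.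
Proof.
move=> h; rewrite /piE -(subnKC h) big_split_ord /=.
rewrite [X in _ = _ + X]big1 ?addr0 // => i _.
by rewrite nth_default ?mul0r // leq_addr.
Qed.

Lemma eqv_pi x y : eqv x y -> piE x = piE y.
Proof.
move=> h; rewrite (piE_ext (leq_maxl (size x) (size y))) (piE_ext (leq_maxr (size x) (size y))).
by apply: eq_bigr => i _; rewrite h.
Qed.

Lemma pi_addE x y : piE (addE x y) = piE x + piE y.
Proof.
rewrite (piE_ext (leq_maxl (size x) (size y))) (piE_ext (leq_maxr (size x) (size y))).
rewrite /piE size_mkseq -big_split /=; apply: eq_bigr => i _.
by rewrite nth_addE mulrDl.
Qed.

Lemma pi_sc k x : piE (sc k x) = k * piE x.
Proof.
rewrite /piE size_map mulr_sumr; apply: eq_bigr => i _.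
by rewrite nth_sc mulrA.
Qed.

Lemma pi_ei j : piE (ei j) = wt j.
Proof.
rewrite /piE /ei size_rcons size_nseq big_ord_recr /= big1 ?add0r.
  by rewrite -/(ei j) nth_ei eqxx mul1r.
move=> i _; rewrite -/(ei j) nth_ei.
by rewrite (ltn_eqF (ltn_ord i)) mul0r.
Qed.

Lemma pi_cons h s : piE (h :: s) = h + \sum_(i < size s) s`_i * wt i.+1.
Proof. by rewrite /piE big_ord_recl /= mulr1. Qed.

Lemma pi_nil : piE [::] = 0.
Proof. by rewrite /piE big_ord0. Qed.

Lemma pi_split x : piE x = x`_0 + piE (0 :: behead x).
Proof.
case: x => [|h s]; first by rewrite pi_nil pi_cons big_ord0 !addr0.
by rewrite !pi_cons add0r.
Qed.

Definition mz : int := Posz m.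
Lemma mz_neq0 : mz != 0. Proof. by rewrite /mz -lt0n. Qed.
Lemma mz_gt0 : 0 < mz. Proof. by rewrite /mz ltz_nat. Qed.

Definition psi (x : seq int) : seq int :=
  (mz * x`_1 - piE (0 :: drop 2 x)) :: drop 2 x.

Fixpoint eact (x : seq int) (L : seq (int * bool)) : seq (int * bool) :=
  if L is (t, b) :: rest then
    if b then ((t + piE x) %% mz, true)%Z :: eact (0 :: ((t + piE x) %/ mz)%Z :: behead x) rest
    else (t + x`_0, false) :: eact (psi x) rest
  else [::].

Lemma pi_psi x : piE (psi x) = mz * x`_1.
Proof.
rewrite /psi pi_cons; set d := drop 2 x.
by rewrite pi_cons add0r addrNK.
Qed.

Lemma eqv_cons0 x y : eqv x y -> eqv (0 :: drop 2 x) (0 :: drop 2 y).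
Proof. by move=> h [|i] //=; rewrite !nth_drop h. Qed.

Lemma eqv_psi x y : eqv x y -> eqv (psi x) (psi y).
Proof.
move=> h [|i] /=; first by rewrite h (eqv_pi (eqv_cons0 h)).
by rewrite !nth_drop h.
Qed.

Lemma eact_eqv L x y : eqv x y -> eact x L = eact y L.
Proof.
elim: L x y => [|[t b] L IH] x y h //=.
case: b; rewrite ?(eqv_pi h).
  by congr (_ :: _); apply: IH => -[|[|i]] //=; rewrite !nth_behead h.
by rewrite h; congr (_ :: _); apply: IH; apply: eqv_psi.
Qed.

Lemma eact_law L x y : eact x (eact y L) = eact (addE x y) L.
Proof.
elim: L x y => [|[t b] L IH] x y //=.
case: b => /=.
  rewrite IH pi_addE; congr (_ :: _).
    by rewrite modzDml addrAC addrA.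
  apply: eact_eqv => -[|[|i]] /=; rewrite ?nth_addE ?addr0 //.
    rewrite [X in _ = (X %/ _)%Z](_ : _ = ((t + piE y) %/ mz)%Z * mz + (((t + piE y) %% mz)%Z + piE x)).
      by rewrite divzMDl ?mz_neq0 // addrC.
    by rewrite [RHS]addrA -divz_eq [piE x + _]addrC addrA.
  by rewrite /= !nth_behead nth_addE.
rewrite IH nth_addE; congr (_ :: _).
  by rewrite -addrA (addrC (nth 0 y 0)).
apply: eact_eqv => -[|i]; last by rewrite nth_addE /psi /= !nth_drop nth_addE.
rewrite nth_addE /psi /=.
have -> : piE (0 :: drop 2 (addE x y)) = piE (0 :: drop 2 x) + piE (0 :: drop 2 y).
  rewrite -pi_addE; apply: eqv_pi => -[|i] /=; rewrite nth_addE //= ?addr0 //.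
  by rewrite !nth_drop nth_addE.
by rewrite nth_addE mulrDr opprD addrACA.
Qed.

Definition rng (e : int * bool) := e.2 ==> ((0 <= e.1) && (e.1 < mz)).
Definition bad (e f : int * bool) := (f.1 == 0) && (f.2 == ~~ e.2).
Fixpoint red (L : seq (int * bool)) : bool :=
  if L is e :: rest then [&& rng e, red rest & (if rest is f :: _ then ~~ bad e f else true)]
  else true.

Lemma eact0 L x : eqv x [::] -> red L -> eact x L = L.
Proof.
elim: L x => [|[t b] L IH] x h //= /and3P[hr hL _].
case: b hr => hr; rewrite /rng /= in hr.
  rewrite (eqv_pi h) pi_nil addr0 modz_small // divz_small; last first.
    by rewrite /mz /=.
  by rewrite IH // => -[|[|i]] //=; rewrite nth_behead h.
rewrite h addr0 IH // => -[|i] /=; last by rewrite nth_drop h.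
rewrite h mulr0 add0r (eqv_pi (y := [::])) ?pi_nil ?oppr0 //.
by move=> -[|i] //=; rewrite nth_drop h.
Qed.
Lemma red_tail e L : red (e :: L) -> red L.
Proof. by case/and3P. Qed.

Lemma red_rng e L : red (e :: L) -> rng e.
Proof. by case/and3P. Qed.

Lemma modz_mzK a k : 0 <= a < mz -> ((a + mz * k) %% mz)%Z = a.
Proof.
move=> h; rewrite mulrC addrC.
by rewrite -modzDml modzMl add0r modz_small.
Qed.

Lemma eact_red L x : red L -> red (eact x L).
Proof.
elim: L x => [|[t b] L IH] x //= /and3P[hr hL hb].
case: b hr hb => hr hb; apply/and3P; split.
- by rewrite /rng /= modz_ge0 ?mz_neq0 // ltz_pmod // mz_gt0.
- by apply: IH.
- case: L IH hL hb => [|[t1 b1] L'] IH hL hb //.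
  by case: b1 IH hL hb => IH hL hb //=; rewrite /bad /= ?addr0 ?andbF in hb *.
- by rewrite /rng.
- by apply: IH.
- case: L IH hL hb => [|[t1 b1] L'] IH hL hb //.
  case: b1 IH hL hb => IH hL hb //=.
  case/and3P: hL => hr1 _ _.
  by rewrite pi_psi modz_mzK.
  by rewrite /bad /= andbF.
Qed.

Definition isA (b0 : bool) (L : seq (int * bool)) :=
  if L is (t, b) :: _ then (t == 0) && (b == b0) else false.
Definition aact L := if isA true L then behead L else (0, false) :: L.
Definition ainv L := if isA false L then behead L else (0, true) :: L.

Lemma aact_red L : red L -> red (aact L).
Proof.
rewrite /aact; case: ifP => hA hL; first by case: L hA hL => [|e L] // _ /red_tail.
rewrite /= hL /=; case: L hA {hL} => [|[t b] L] //=.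
by rewrite /bad /= => ->.
Qed.

Lemma ainv_red L : red L -> red (ainv L).
Proof.
rewrite /ainv; case: ifP => hA hL; first by case: L hA hL => [|e L] // _ /red_tail.
rewrite /= hL /rng /= mz_gt0 /=; case: L hA {hL} => [|[t b] L] //=.
by rewrite /bad /= => ->.
Qed.

Lemma aactK L : red L -> aact (ainv L) = L.
Proof.
rewrite /ainv; case: ifP => hA hL.
  case: L hA hL => [|[t b] L] //= /andP[/eqP -> /eqP ->] /and3P[_ hL hb].
  rewrite /aact; case: L hL hb => [|[t1 b1] L] //= _.
  by rewrite /bad /= => /negbTE ->.
by rewrite /aact /= ?eqxx.
Qed.

Lemma ainvK L : red L -> ainv (aact L) = L.
Proof.
rewrite /aact; case: ifP => hA hL.
  case: L hA hL => [|[t b] L] //= /andP[/eqP -> /eqP ->] /and3P[_ hL hb].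
  rewrite /ainv; case: L hL hb => [|[t1 b1] L] //= _.
  by rewrite /bad /= => /negbTE ->.
by rewrite /ainv /= ?eqxx.
Qed.

Definition lact (l : letter) (L : seq (int * bool)) :=
  match l with
  | (GA, b) => if b then ainv L else aact L
  | (GE i, b) => eact (if b then sc (-1) (ei i) else ei i) L
  end.
Definition act (w : word) L := foldr lact L w.

Lemma act_cat w1 w2 L : act (w1 ++ w2) L = act w1 (act w2 L).
Proof. by rewrite /act foldr_cat. Qed.

Lemma lact_red l L : red L -> red (lact l L).
Proof.
case: l => [[|i] b] h /=; last exact: eact_red.
by case: b; [apply: ainv_red | apply: aact_red].
Qed.

Lemma act_red w L : red L -> red (act w L).
Proof. by elim: w => //= l w IH h; apply: lact_red; apply: IH. Qed.

Lemma eqv_nil_addE_neg x : eqv (addE x (sc (-1) x)) [::].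
Proof. by move=> i; rewrite nth_addE nth_sc mulN1r subrr nth_nil. Qed.

Lemma eqv_nil_addE_neg' x : eqv (addE (sc (-1) x) x) [::].
Proof. by move=> i; rewrite nth_addE nth_sc mulN1r addNr nth_nil. Qed.

Lemma lactK l L : red L -> lact l (lact (linv l) L) = L.
Proof.
case: l => [[|i] [|]] h /=.
- exact: ainvK.
- exact: aactK.
- by rewrite eact_law eact0 //; first [apply: eqv_nil_addE_neg | apply: eqv_nil_addE_neg'].
- by rewrite eact_law eact0 //; first [apply: eqv_nil_addE_neg | apply: eqv_nil_addE_neg'].
Qed.
Definition phi' (x : seq int) : seq int := 0 :: (piE x %/ mz)%Z :: behead x.

Lemma eqv_psi_phi x : (piE x %% mz)%Z = 0 -> eqv x (psi (phi' x)).
Proof.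
move=> hx [|i] /=; last by rewrite nth_drop /= nth_behead.
have e1 : mz * (piE x %/ mz)%Z = piE x.
  by rewrite [RHS](divz_eq (piE x) mz) hx addr0 mulrC.
by rewrite e1 drop0 [piE x]pi_split addrK.
Qed.

Lemma conj x N : (piE x %% mz)%Z = 0 -> red N -> aact (eact x (ainv N)) = eact (phi' x) N.
Proof.
move=> hx hN; rewrite /ainv; case: ifP => hA.
  case: N hA hN => [|[t b] N] //= /andP[/eqP -> /eqP ->] /and3P[_ hN hb].
  have -> : aact (eact x N) = (0, false) :: eact x N.
    rewrite /aact; case: N hN hb => [|[t1 b1] N] //= hN hb.
    case: b1 hN hb => hN hb //=.
    have hr1 := red_rng hN; rewrite /rng /= in hr1.
    rewrite -modzDmr hx addr0 modz_small //.
    by rewrite /bad /= andbT in hb; rewrite (negbTE hb).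
    by rewrite andbF.
  rewrite addr0; congr (_ :: _).
  by apply: eact_eqv; apply: eqv_psi_phi.
by rewrite /= add0r hx /aact /=.
Qed.

Lemma act_nseq i b n L : red L ->
  act (nseq n (GE i, b)) L = eact (sc (n%:Z * (if b then -1 else 1)) (ei i)) L.
Proof.
move=> hL; elim: n => [|n IH].
  by rewrite /= eact0 // => j; rewrite nth_sc !mul0r nth_nil.
rewrite /= IH eact_law; apply: eact_eqv => j.
rewrite nth_addE !nth_sc intS !mulrDl.
case: b {IH}; rewrite ?nth_sc ?mul1r ?mulr1 //.
Qed.

Lemma act_gpow i k L : red L -> act (gpow (GE i) k) L = eact (sc k (ei i)) L.
Proof.
move=> hL; case: k => n; rewrite /gpow act_nseq //.
  by rewrite mulr1.
by rewrite NegzE mulrN1.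
Qed.

Lemma act_cons l w L : act (l :: w) L = lact l (act w L).
Proof. by []. Qed.
Lemma act_nil L : act [::] L = L.
Proof. by []. Qed.
Lemma lact_af L : lact (GA, false) L = aact L. Proof. by []. Qed.
Lemma lact_at L : lact (GA, true) L = ainv L. Proof. by []. Qed.
Lemma lact_ef i L : lact (GE i, false) L = eact (ei i) L. Proof. by []. Qed.
Lemma lact_et i L : lact (GE i, true) L = eact (sc (-1) (ei i)) L. Proof. by []. Qed.

Lemma phi_e_eqv x k : piE x = 0 -> (forall j, x`_j.+1 = (ei k)`_j.+1) -> (1 <= k)%N ->
  eqv (addE (phi' x) (sc (-1) (ei k.+1))) [::].
Proof.
move=> hp hx hk [|[|j]]; rewrite nth_addE nth_sc nth_ei nth_nil /phi' /=.
- by rewrite mulr0 addr0.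
- by rewrite hp div0z add0r; case: k hk hx => // k; rewrite mulr0.
- by rewrite nth_behead hx nth_ei eqSS; case: (j.+1 == k); rewrite ?mulr0 ?addr0 ?mulr1 ?subrr.
Qed.

Lemma rel_act r L : relator m xi r -> red L -> act r L = L.
Proof.
case => [i j | | i hi] hL.
- rewrite !act_cons act_nil !lact_ef !lact_et !eact_law eact0 // => k.
  rewrite !nth_addE !nth_sc nth_nil !mulN1r.
  by rewrite [_ + _ - _]addrAC addrK subrr.
- rewrite act_cons act_cat !act_cons act_nil lact_af lact_at lact_et.
  rewrite act_gpow; last by apply/ainv_red/eact_red.
  rewrite conj; last by apply: eact_red.
    rewrite eact_law eact0 // => -[|[|j]] /=.
    + by rewrite mulr0 addr0.
    + by rewrite /piE big_ord1 /= !mulr1 /mz -[X in (X %/ _)%Z]mul1r mulzK //; exact: mz_neq0.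
    + by rewrite nth_nil.
  by rewrite pi_sc pi_ei /= mulr1 -[X in (X %% _)%Z]mul1r modzMl.
- rewrite !act_cons act_cat !act_cons act_nil lact_af lact_ef lact_at lact_et.
  rewrite act_gpow; last by apply/ainv_red/eact_red.
  rewrite eact_law.
  have hp : piE (addE (ei i) (sc (- Posz (padic_r m xi i)) (ei 0))) = 0.
    rewrite pi_addE pi_sc !pi_ei /= mulr1.
    by case: i hi => // i _; rewrite /= subrr.
  rewrite conj; last by apply: eact_red.
    rewrite eact_law eact0 //; apply: phi_e_eqv => // j.
    by rewrite nth_addE nth_sc !nth_ei mulr0 addr0.
  by rewrite hp mod0z.
Qed.

Lemma grp_act w1 w2 : grp_eq m xi w1 w2 -> forall L, red L -> act w1 L = act w2 L.
Proof.
elim => {w1 w2}.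
- by [].
- by move=> w1 w2 _ IH L hL; rewrite IH.
- by move=> w1 w2 w3 _ IH1 _ IH2 L hL; rewrite IH1 // IH2.
- by move=> u v l L hL; rewrite !act_cat !act_cons lactK //; apply: act_red.
- by move=> u v r hr L hL; rewrite !act_cat (rel_act hr) //; apply: act_red.
Qed.
Definition tailw (u : nat -> int) i k : word :=
  flatten [seq gpow (GE 0) (- u j) ++ [:: (GA, true)] | j <- iota i k].

Lemma tailwS u i k :
  tailw u i k.+1 = (gpow (GE 0) (- u i) ++ [:: (GA, true)]) ++ tailw u i.+1 k.
Proof. by []. Qed.

Lemma act_tailS u i k L : red L ->
  act (tailw u i k.+1) L = eact (sc (- u i) (ei 0)) (ainv (act (tailw u i.+1 k) L)).
Proof.
move=> hL.
change (tailw u i k.+1) with ((gpow (GE 0) (- u i) ++ [:: (GA, true)]) ++ tailw u i.+1 k).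
rewrite !act_cat act_cons act_nil lact_at act_gpow //.
by apply/ainv_red/act_red.
Qed.

Lemma ainv_hnot N : ~~ isA false N -> ainv N = (0, true) :: N.
Proof. by move=> h; rewrite /ainv (negbTE h). Qed.

Lemma tail_hnot u i k L : red L -> ~~ isA false L -> ~~ isA false (act (tailw u i k) L).
Proof.
move=> hL; elim: k i => [|k IH] i hA //.
rewrite act_tailS // ainv_hnot; last by apply: IH.
by rewrite /= andbF.
Qed.

Lemma iter_aact k L : ~~ isA true L -> iter k aact L = nseq k (0, false) ++ L.
Proof.
move=> hL; elim: k => [|k IH] //.
rewrite iterS IH /aact.
case: k {IH} => [|k]; first by rewrite /= (negbTE hL).
by [].
Qed.

Lemma act_nseqA k L : act (nseq k (GA, false)) L = iter k aact L.
Proof. by elim: k => //= k ->. Qed.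

Definition X (s : int) (u : nat -> int) k := addE (sc s (ei k)) (sc (- u k) (ei 0)).

Lemma eqv_X1 s c u : c = s * mz ->
  eqv (addE (phi' (sc c (ei 0))) (sc (- u 1%N) (ei 0))) (X s u 1).
Proof.
move=> hc [|[|j]]; rewrite /X !nth_addE !nth_sc !nth_ei /phi' /=.
- by rewrite mulr0.
- by rewrite /piE big_ord1 /= !mulr1 !mulr0 !addr0 hc mulzK //; exact: mz_neq0.
- by rewrite nth_nil !mulr0 addr0.
Qed.

Lemma eqv_Xstep s u i : (1 <= i)%N -> piE (X s u i) = 0 ->
  eqv (addE (phi' (X s u i)) (sc (- u i.+1) (ei 0))) (X s u i.+1).
Proof.
move=> hi hp [|[|j]]; rewrite /X !nth_addE !nth_sc !nth_ei /phi' /=.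
- by rewrite mulr0.
- rewrite -/(X s u i) hp div0z.
  by case: i hi hp => // i _ _; rewrite !mulr0.
- rewrite nth_behead nth_addE !nth_sc !nth_ei eqSS /=.
- by rewrite nth_nil addr0.
Qed.

Lemma modelG s c u n L : c = s * mz -> red L -> ~~ isA false L -> (1 <= n)%N ->
  forall i, (1 <= i <= n)%N -> (forall k, (1 <= k < i)%N -> piE (X s u k) = 0) ->
  act (wword n c u) L =
    iter (n - i).+1 aact (eact (X s u i) (ainv (act (tailw u i.+1 (n - i)) L))).
Proof.
move=> hc hL hA; case: n => [|n] // _.
elim => [|i IH] // /andP[hi1 hin] hk.
case: i IH hi1 hin hk => [|i] IH _ hin hk.
  change (wword n.+1 c u) with
    (nseq n.+2 (GA, false) ++ gpow (GE 0) c ++ (GA, true) :: tailw u 1 n.+1).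
  rewrite act_cat act_nseqA act_cat act_cons lact_at act_gpow; last by apply/ainv_red/act_red.
  rewrite iterSr conj; first last.
  - by apply: act_red.
  - by rewrite pi_sc pi_ei mulr1 hc modzMl.
  rewrite subSS subn0 act_tailS // eact_law.
  by congr (iter _ _ _); apply: eact_eqv; apply: eqv_X1.
have hi : (1 <= i.+1)%N by [].
rewrite IH; last first.
- by move=> k /andP[hk1 hk2]; apply: hk; rewrite hk1 ltnW.
- by rewrite hi ltnW.
have hpi : piE (X s u i.+1) = 0 by apply: hk; rewrite hi leqnn.
have hin2 : (i < n)%N by rewrite -ltnS.
rewrite !subSS -(subnSK hin2) iterSr conj; first last.
- by apply: act_red.
- by rewrite hpi mod0z.
rewrite act_tailS // eact_law.
by congr (iter _ _ _); apply: eact_eqv; apply: eqv_Xstep.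
Qed.

Lemma terminal x N k : (piE x %% mz)%Z != 0 -> ~~ isA false N ->
  exists R, iter k.+1 aact (eact x (ainv N)) = (0, false) :: R.
Proof.
move=> hx hA; rewrite ainv_hnot // iter_aact /=; first by eexists.
by rewrite add0r andbT.
Qed.

Lemma conv_nonempty s c u n L j : c = s * mz -> red L -> ~~ isA false L ->
  (1 <= j <= n)%N -> (forall k, (1 <= k < j)%N -> piE (X s u k) = 0) ->
  (piE (X s u j) %% mz)%Z != 0 -> exists R, act (wword n c u) L = (0, false) :: R.
Proof.
move=> hc hL hA hj hk hx.
have hn : (1 <= n)%N by case/andP: hj => h1 h2; apply: leq_trans h2.
rewrite (modelG hc hL hA hn hj hk).
by apply: terminal => //; apply: tail_hnot.
Qed.

Lemma eE_nil w : all is_E_letter w -> act w [::] = [::].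
Proof.
elim: w => [|[[|i] b] w IH] //= hw.
by rewrite IH.
Qed.
Notation ge := (grp_eq m xi).

Lemma ge_ctx x y p q : ge x y -> ge (p ++ x ++ q) (p ++ y ++ q).
Proof.
elim => {x y}.
- by move=> w; apply: geq_refl.
- by move=> w1 w2 _ IH; apply: geq_sym.
- by move=> w1 w2 w3 _ IH1 _ IH2; apply: geq_trans IH2.
- move=> u v l; have := geq_cancel m xi (p ++ u) (v ++ q) l.
  by rewrite -!catA.
- move=> u v r hr; have := geq_rel (p ++ u) (v ++ q) hr.
  by rewrite -!catA.
Qed.

Lemma ge_l p x y : ge x y -> ge (p ++ x) (p ++ y).
Proof. by move=> h; have := ge_ctx p [::] h; rewrite !cats0. Qed.

Lemma ge_r q x y : ge x y -> ge (x ++ q) (y ++ q).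
Proof. by move=> h; have := ge_ctx [::] q h. Qed.

Lemma ge_rel r : relator m xi r -> ge r [::].
Proof. by move=> hr; have := geq_rel [::] [::] hr; rewrite /= cats0. Qed.

Lemma linvK l : linv (linv l) = l.
Proof. by case: l => g b; rewrite /linv /= negbK. Qed.

Lemma ge_solve w l : ge (w ++ [:: linv l]) [::] -> ge w [:: l].
Proof.
move=> h.
apply: (@geq_trans _ _ _ (w ++ [:: linv l; l])).
  have := geq_cancel m xi w [::] (linv l); rewrite linvK cats0 => hc.
  by apply: geq_sym.
by have := ge_r [:: l] h; rewrite -catA.
Qed.

Definition inv (w : word) : word := rev (map linv w).

Lemma inv_cat x y : inv (x ++ y) = inv y ++ inv x.
Proof. by rewrite /inv map_cat rev_cat. Qed.

Lemma inv_cons l w : inv (l :: w) = inv w ++ [:: linv l].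
Proof. by rewrite /inv map_cons rev_cons cats1. Qed.

Lemma nseqSr (T : Type) (x : T) k : nseq k.+1 x = nseq k x ++ [:: x].
Proof. by elim: k => //= k <-. Qed.

Lemma inv_nseq k l : inv (nseq k l) = nseq k (linv l).
Proof.
elim: k => [|k IH] //.
by rewrite inv_cons IH nseqSr.
Qed.

Lemma ge_inv_cancel w : ge (inv w ++ w) [::].
Proof.
elim: w => [|l w IH]; first exact: geq_refl.
rewrite inv_cons -catA /=; apply: geq_trans IH.
by have := geq_cancel m xi (inv w) w (linv l); rewrite linvK.
Qed.

Lemma ge_inv x y : ge x y -> ge (inv x) (inv y).
Proof.
elim => {x y}.
- by move=> w; apply: geq_refl.
- by move=> w1 w2 _ IH; apply: geq_sym.
- by move=> w1 w2 w3 _ IH1 _ IH2; apply: geq_trans IH2.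
- move=> u v l; rewrite !inv_cat !inv_cons linvK -!catA /=.
  exact: geq_cancel.
- move=> u v r hr; rewrite !inv_cat.
  have hr' : ge (inv r) [::].
    apply: (@geq_trans _ _ _ (inv r ++ r)); last exact: ge_inv_cancel.
    by have := geq_rel (inv r) [::] hr; rewrite !cats0 => h; apply: geq_sym.
  by rewrite -catA; have := ge_ctx (inv v) (inv u) hr'.
Qed.

Lemma c1 i : ge [:: (GE 0, false); (GE i, false)] [:: (GE i, false); (GE 0, false)].
Proof.
have h1 : ge [:: (GE 0, false); (GE i, false); (GE 0, true)] [:: (GE i, false)].
  apply: (@ge_solve _ (GE i, false)); exact: ge_rel (rel_comm m xi 0 i).
apply: (@geq_trans _ _ _ ([:: (GE 0, false); (GE i, false); (GE 0, true)] ++ [:: (GE 0, false)])).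
  by apply: geq_sym; exact: (geq_cancel m xi [:: (GE 0, false); (GE i, false)] [::] (GE 0, true)).
exact: (ge_r [:: (GE 0, false)] h1).
Qed.

Lemma c2 i q : ge ((GE i, true) :: (GE 0, false) :: q) ((GE 0, false) :: (GE i, true) :: q).
Proof.
apply: (@geq_trans _ _ _ ([:: (GE i, true)] ++ [:: (GE 0, false); (GE i, false)] ++ ((GE i, true) :: q))).
  by apply: geq_sym; exact: (geq_cancel m xi [:: (GE i, true); (GE 0, false)] q (GE i, false)).
apply: (@geq_trans _ _ _ ([:: (GE i, true)] ++ [:: (GE i, false); (GE 0, false)] ++ ((GE i, true) :: q))).
  exact: ge_ctx (c1 i).
exact: (geq_cancel m xi [::] ((GE 0, false) :: (GE i, true) :: q) (GE i, true)).
Qed.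

Lemma c3 i r q : ge ((GE i, true) :: nseq r (GE 0, false) ++ q) (nseq r (GE 0, false) ++ (GE i, true) :: q).
Proof.
elim: r => [|r IH]; first exact: geq_refl.
apply: geq_trans (c2 i (nseq r (GE 0, false) ++ q)) _.
exact: (ge_l [:: (GE 0, false)] IH).
Qed.

Lemma gpow_negm : gpow (GE 0) (- Posz m) = nseq m (GE 0, true).
Proof.
have -> : (- Posz m) = Negz m.-1 by rewrite NegzE prednK.
by change (gpow (GE 0) (Negz m.-1)) with (nseq m.-1.+1 (GE 0, true)); rewrite prednK.
Qed.

Lemma inv_gpowN r : inv (gpow (GE 0) (- Posz r)) = gpow (GE 0) (Posz r).
Proof.
case: r => [|r]; first by rewrite oppr0.
by rewrite -NegzE; change (gpow (GE 0) (Negz r)) with (nseq r.+1 (GE 0, true)); rewrite inv_nseq.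
Qed.

Lemma K0 : ge ((GA, false) :: gpow (GE 0) (Posz m) ++ [:: (GA, true)]) [:: (GE 1, false)].
Proof.
apply: (@ge_solve _ (GE 1, false)).
have := ge_rel (rel_zero m xi).
by rewrite /= -catA.
Qed.

Lemma K0' : ge ((GA, false) :: gpow (GE 0) (- Posz m) ++ [:: (GA, true)]) [:: (GE 1, true)].
Proof.
have := ge_inv K0.
by rewrite inv_cons inv_cat gpow_negm /= inv_nseq.
Qed.

Lemma Ks i : (0 < i)%N ->
  ge ((GA, false) :: (GE i, false) :: gpow (GE 0) (- Posz (padic_r m xi i)) ++ [:: (GA, true)])
     [:: (GE i.+1, false)].
Proof.
move=> hi; apply: (@ge_solve _ (GE i.+1, false)).
have := ge_rel (rel_succ m xi hi).
by rewrite /= -catA.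
Qed.

Lemma Ks' i : (0 < i)%N ->
  ge ((GA, false) :: (GE i, true) :: gpow (GE 0) (Posz (padic_r m xi i)) ++ [:: (GA, true)])
     [:: (GE i.+1, true)].
Proof.
move=> hi; have := ge_inv (Ks hi).
rewrite !inv_cons inv_cat inv_gpowN /= -!catA /= => h.
apply: geq_trans h.
exact: (ge_l [:: (GA, false)] (c3 i _ [:: (GA, true)])).
Qed.

Lemma fwd b c u n :
  ge ((GA, false) :: gpow (GE 0) c ++ [:: (GA, true)]) [:: (GE 1, b)] ->
  (forall i, (1 <= i <= n)%N ->
     ge ((GA, false) :: (GE i, b) :: gpow (GE 0) (- u i) ++ [:: (GA, true)]) [:: (GE i.+1, b)]) ->
  ge (wword n c u) [:: (GE n.+1, b)].
Proof.
move=> H0 Hs.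
have st : forall i, (1 <= i <= n.+1)%N ->
  ge (wword n c u) (nseq (n.+1 - i) (GA, false) ++ (GE i, b) :: tailw u i (n.+1 - i)).
  elim => [|i IH] // /andP[hi1 hin].
  case: i IH hi1 hin => [|i] IH _ hin.
    change (wword n c u) with
      (nseq n.+1 (GA, false) ++ gpow (GE 0) c ++ (GA, true) :: tailw u 1 n).
    rewrite subSS subn0 nseqSr -catA.
    by have := ge_ctx (nseq n (GA, false)) (tailw u 1 n) H0; rewrite /= -!catA /=.
  have hin' : (i.+1 <= n)%N by [].
  have hIH : (0 < i.+1 <= n.+1)%N by rewrite /= ltnW.
  apply: geq_trans (IH hIH) _.
  rewrite (subSn hin') subSS nseqSr -catA.
  have hs : (0 < i.+1 <= n)%N by rewrite hin'.
  have := ge_ctx (nseq (n - i.+1) (GA, false)) (tailw u i.+2 (n - i.+1)) (Hs _ hs).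
  by rewrite tailwS /= -!catA /=.
by have := st n.+1; rewrite subnn /= leqnn; apply.
Qed.
Lemma piX s u k : (1 <= k)%N -> piE (X s u k) = s * Posz (padic_r m xi k) - u k.
Proof.
move=> hk; rewrite /X pi_addE !pi_sc !pi_ei /= mulr1.
by case: k hk.
Qed.

Lemma mism (a b : nat) : (a < m)%N -> (b < m)%N -> a <> b -> ((Posz a - Posz b) %% mz)%Z != 0.
Proof.
move=> ha hb hab; apply/eqP => h.
have : ((Posz a - Posz b + Posz b) %% mz)%Z = (Posz b %% mz)%Z by rewrite -modzDml h add0r.
by rewrite subrK !modz_small // => -[].
Qed.
End Model.

Unset Implicit Arguments.

Theorem lemma5p4 (m : nat) (xi : nat -> nat) (n : nat) (t : nat -> nat) :
  0 < m -> is_padic m xi -> 1 <= n ->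
  (forall i, 1 <= i <= n -> t i < m) ->
  let w1 := wword n (Posz m) (fun i => Posz (t i)) in
  let w2 := wword n (- Posz m)%R (fun i => (- Posz (t i))%R) in
  let P1 := in_E m xi w1 in
  let P2 := grp_eq m xi (w1 ++ (GE 0, false) :: w2 ++ [:: (GE 0, true)]) [::] in
  let P3 := forall i, 1 <= i <= n -> t i = padic_r m xi i in
  (P1 <-> P3) /\ (P2 <-> P3).
Proof.
move=> hm hxi hn ht w1 w2 P1 P2 P3.
have rlt : forall i, 1 <= i -> padic_r m xi i < m.
  by case=> // i _; rewrite /= /padic_mul expn1 ltn_pmod.
have dec : P3 \/ exists j, [/\ 1 <= j <= n,
    (forall k, 1 <= k < j -> t k = padic_r m xi k) & t j <> padic_r m xi j].
  pose P := fun j => (1 <= j <= n) && (t j != padic_r m xi j).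
  case: (boolP (has P (iota 1 n))) => [hh|hh].
    right; have exP : exists j, P j by case/hasP: hh => j _ hj; exists j.
    case: (ex_minnP exP) => j /andP[hj1 hj2] hmin.
    exists j; split => //; last by apply/eqP.
    move=> k /andP[hk1 hk2]; case: (eqVneq (t k) (padic_r m xi k)) => // hne.
    have hkn : k <= n by case/andP: hj1 => _ hjn; apply: leq_trans (ltnW hk2) hjn.
    have := hmin k; rewrite /P hk1 hkn hne /= => /(_ isT).
    by rewrite leqNgt hk2.
  left => i hi; apply/eqP.
  move/hasPn: hh => /(_ i); rewrite mem_iota add1n ltnS hi /P.
  by move/(_ isT); rewrite hi /= negbK.
have fw1 : P3 -> grp_eq m xi w1 [:: (GE n.+1, false)].
  move=> h3; apply: fwd; first exact: K0.
  move=> i hi; rewrite (h3 i hi); apply: Ks; by case/andP: hi.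
have fw2 : P3 -> grp_eq m xi w2 [:: (GE n.+1, true)].
  move=> h3; apply: fwd; first exact: K0'.
  move=> i hi; rewrite GRing.opprK (h3 i hi); apply: Ks'; by case/andP: hi.
have bad1 : forall j, [/\ 1 <= j <= n,
    (forall k, 1 <= k < j -> t k = padic_r m xi k) & t j <> padic_r m xi j] ->
    (forall L, red m L -> ~~ isA false L -> exists R, act m xi w1 L = (0%R, false) :: R) /\
    (exists R, act m xi w2 [::] = (0%R, false) :: R).
  move=> j [hj hk hne]; have hj1 : 1 <= j by case/andP: hj.
  have htj : t j < m by apply: ht.
  split.
    move=> L hL hA; apply: (@conv_nonempty m xi hm 1%R _ _ n L j) => //.
    - by rewrite GRing.mul1r.
    - move=> k hk'; have hk1 : 1 <= k by case/andP: hk'.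
      by rewrite piX // GRing.mul1r (hk k hk') GRing.subrr.
    - rewrite piX // GRing.mul1r; apply: mism => //; first exact: rlt.
      by move=> e; apply: hne.
  apply: (@conv_nonempty m xi hm (-1)%R _ _ n [::] j) => //.
  - by rewrite GRing.mulN1r.
  - move=> k hk'; have hk1 : 1 <= k by case/andP: hk'.
    by rewrite piX // GRing.mulN1r GRing.opprK (hk k hk') GRing.addNr.
  - rewrite piX // GRing.mulN1r GRing.opprK GRing.addrC; apply: mism => //; first exact: rlt.
split; split.
- move=> h1; case: dec => // -[j hj]; exfalso.
  case: (bad1 j hj) => /(_ [::] isT isT) [R hR] _.
  case: h1 => v [hv hgv].
  have := grp_act hm hgv (L := [::]) isT.
  by rewrite hR eE_nil.
- by move=> h3; exists [:: (GE n.+1, false)]; split => //; apply: fw1.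
- move=> h2; case: dec => // -[j hj]; exfalso.
  case: (bad1 j hj) => h1L [R2 hR2].
  have := grp_act hm h2 (L := [::]) isT.
  clearbody w1 w2.
  rewrite act_cat act_cons act_cat act_cons act_nil lact_ef lact_et /= hR2.
  set L := eact _ _ (ei 0) _.
  have hL : red m L by apply: eact_red => //; rewrite -hR2; apply: act_red.
  case: (h1L L hL) => [|R hR]; first by rewrite /L /= ?GRing.add0r.
  by rewrite hR.
- move=> h3.
  apply: geq_trans (ge_r ((GE 0, false) :: w2 ++ [:: (GE 0, true)]) (fw1 h3)) _.
  apply: geq_trans (ge_ctx [:: (GE n.+1, false); (GE 0, false)] [:: (GE 0, true)] (fw2 h3)) _.
  exact: ge_rel (rel_comm m xi n.+1 0).
Qed.
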